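(* Let $n$ be a positive even integer. For $m=1,\dots,n+1$ and $k=1,\dots,\tfrac n2+1$ put $x_m=\cos\frac{m\pi}{n+2}$ and $y_{m,k}=\cos\frac{2k\pi}{n+3}$ if $m$ is odd, $y_{m,k}=\cos\frac{(2k-1)\pi}{n+3}$ if $m$ is even. For non-negative integers $i,j$ let $$I(i,j):=\sum_{m=1}^{n+1}\sum_{k=1}^{\frac n2+1}(1-x_m^2)(1-y_{m,k}^2)\,U_i(x_m)\,U_j(y_{m,k}).$$ If $i$ is such that $n+2$ divides neither $i$ nor $i+2$, or $j$ is such that $n+3$ divides neither $j$ nor $j+2$, then $I(i,j)=0$. In all other cases, with $\mu,\nu$ integers and $C_n=\frac{8}{(n+2)(n+3)}$, $$I(i,j)=\begin{cases}(2C_n)^{-1}[(-1)^\nu+(-1)^\mu], & i=\nu(n+2),\ j=\mu(n+3),\\ -(2C_n)^{-1}[(-1)^\nu+(-1)^\mu], & i=\nu(n+2),\ j=\mu(n+3)-2,\\ -(2C_n)^{-1}[(-1)^\nu+(-1)^\mu], & i=\nu(n+2)-2,\ j=\mu(n+3),\\ (2C_n)^{-1}[(-1)^\nu+(-1)^\mu], & i=\nu(n+2)-2,\ j=\mu(n+3)-2.\end{cases}$$ No upper bound on $i,j$ is required.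
   Context: $U_j$ denotes the Chebyshev polynomial of the second kind of degree $j$, i.e. $U_j(\cos\theta)=\frac{\sin((j+1)\theta)}{\sin\theta}$. *)

(* Defs.v *)
From Stdlib Require Import Reals Lra Lia Arith.
Open Scope R_scope.

(* Chebyshev polynomials of the second kind, by the standard recurrence
   U_0 = 1, U_1 = 2x, U_{j+2} = 2x U_{j+1} - U_j
   (equivalently U_j(cos t) = sin((j+1)t)/sin t). *)
Fixpoint chebU (j : nat) (x : R) : R :=
  match j with
  | O => 1
  | S j' =>
      match j' with
      | O => 2 * x
      | S j'' => 2 * x * chebU j' x - chebU j'' x
      end
  end.

Definition xnode (n m : nat) : R := cos (INR m * PI / INR (n + 2)).

Definition ynode (n m k : nat) : R :=
  if Nat.odd m then cos (2 * INR k * PI / INR (n + 3))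
  else cos ((2 * INR k - 1) * PI / INR (n + 3)).

Definition Isum (n i j : nat) : R :=
  sum_f_R0 (fun m' =>
    let m := S m' in
    sum_f_R0 (fun k' =>
      let k := S k' in
      (1 - (xnode n m)^2) * (1 - (ynode n m k)^2)
        * chebU i (xnode n m) * chebU j (ynode n m k))
      (n / 2)%nat)
    n.

Definition Cn (n : nat) : R := 8 / (INR (n + 2) * INR (n + 3)).

(* Main.v *)
Require Import Defs.
From Stdlib Require Import Reals Arith Lra Lia.
Open Scope R_scope.

Lemma sin_shift (r : nat) (u : R) : sin (u + INR r * PI) = (-1)^r * sin u.
Proof.
  induction r as [|r IH].
  - simpl. replace (u + 0 * PI) with u by ring. ring.
  - change ((-1)^(S r)) with (-1 * (-1)^r). rewrite S_INR. replace (u + (INR r + 1) * PI) with ((u + INR r * PI) + PI) by ring.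
    rewrite neg_sin, IH. ring.
Qed.

Lemma chebU_sin (i0 : nat) (t : R) : sin t * chebU i0 (cos t) = sin (INR (i0+1) * t).
Proof.
  assert (H : forall i, sin t * chebU i (cos t) = sin (INR (i+1) * t) /\
                        sin t * chebU (S i) (cos t) = sin (INR (S i+1) * t)).
  { clear i0. intro i. induction i as [|i IH].
    - simpl. split.
      + replace (1 * t) with t by ring. ring.
      + replace ((1+1) * t) with (2 * t) by ring. rewrite sin_2a. ring.
    - destruct IH as [H1 H2]. split; [exact H2|].
      change (chebU (S (S i)) (cos t)) with (2 * cos t * chebU (S i) (cos t) - chebU i (cos t)).
      replace (sin t * (2 * cos t * chebU (S i) (cos t) - chebU i (cos t)))
        with (2 * cos t * (sin t * chebU (S i) (cos t)) - sin t * chebU i (cos t)) by ring.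
      rewrite H1, H2.
      replace (INR (S (S i) + 1) * t) with (INR (S i + 1) * t + t) by (rewrite !plus_INR, !S_INR; ring).
      replace (INR (i + 1) * t) with (INR (S i + 1) * t - t) by (rewrite !plus_INR, !S_INR; ring).
      rewrite sin_plus, sin_minus. ring. }
  apply H.
Qed.

Lemma cheb_term (i : nat) (t : R) :
  (1 - (cos t)^2) * chebU i (cos t) = sin t * sin (INR (i+1) * t).
Proof.
  rewrite <- chebU_sin. pose proof (sin2_cos2 t). unfold Rsqr in H.
  replace (1 - cos t ^ 2) with (sin t * sin t) by (simpl; lra). ring.
Qed.

Lemma telescope (x : R) (K : nat) :
  2 * sin (x/2) * sum_f_R0 (fun m => cos (INR m * x)) K = sin ((2 * INR K + 1) * x / 2) + sin (x/2).
Proof.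
  induction K as [|K IH].
  - simpl. replace (0 * x) with 0 by ring. rewrite cos_0.
    replace ((2*0+1)*x/2) with (x/2) by field. ring.
  - rewrite tech5, Rmult_plus_distr_l, IH. rewrite S_INR.
    replace ((2 * (INR K + 1) + 1) * x / 2) with ((INR K + 1) * x + x/2) by field.
    replace ((2 * INR K + 1) * x / 2) with ((INR K + 1) * x - x/2) by field.
    rewrite sin_plus, sin_minus. ring.
Qed.

Definition cs (N p : nat) : R := sum_f_R0 (fun m => cos (INR p * INR m * PI / INR N)) (N-1).

Lemma cs_r (N r : nat) : (0 < r)%nat -> (r < 2*N)%nat -> cs N r = (1 - (-1)^r)/2.
Proof.
  intros H0 H1. unfold cs.
  assert (HN : 0 < INR N) by (apply lt_0_INR; lia).
  set (x := INR r * PI / INR N).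
  assert (E : sum_f_R0 (fun m => cos (INR r * INR m * PI / INR N)) (N-1)
              = sum_f_R0 (fun m => cos (INR m * x)) (N-1)).
  { apply sum_eq; intros m _. f_equal. unfold x. field. lra. }
  rewrite E. clear E.
  pose proof (telescope x (N-1)) as T.
  rewrite minus_INR in T by lia. change (INR 1) with 1 in T.
  replace ((2 * (INR N - 1) + 1) * x / 2) with (- (x/2) + INR r * PI) in T
    by (unfold x; field; lra).
  rewrite sin_shift, sin_neg in T.
  assert (Hs : 0 < sin (x/2)).
  { apply sin_gt_0; unfold x.
    - apply Rmult_lt_0_compat; [|lra]. apply Rmult_lt_0_compat; [|apply Rinv_0_lt_compat; lra].
      apply Rmult_lt_0_compat; [apply lt_0_INR; lia| apply PI_RGT_0].
    - assert (INR r < 2 * INR N).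
      { replace 2 with (INR 2) by reflexivity. rewrite <- mult_INR. apply lt_INR. lia. }
      pose proof PI_RGT_0.
      apply Rmult_lt_reg_r with (2 * INR N); [lra|].
      replace (INR r * PI / INR N / 2 * (2 * INR N)) with (INR r * PI) by (field; lra).
      nra. }
  apply Rmult_eq_reg_l with (2 * sin (x/2)); [|lra].
  rewrite T. field.
Qed.

Lemma cs_div (N p : nat) : (0 < N)%nat -> Nat.divide (2*N) p -> cs N p = INR N.
Proof.
  intros HN [c Hc]. unfold cs.
  assert (HN' : 0 < INR N) by (apply lt_0_INR; lia).
  rewrite (sum_eq _ (fun _ => 1)).
  - rewrite sum_cte. replace (S (N-1)) with N by lia. ring.
  - intros m _. subst p. rewrite mult_INR, mult_INR.
    replace (INR c * (INR 2 * INR N) * INR m * PI / INR N) with (0 + 2 * INR (c*m) * PI)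
      by (rewrite mult_INR; simpl; field; lra).
    rewrite cos_period. apply cos_0.
Qed.

Lemma cs_ndiv (N p : nat) : (0 < N)%nat -> ~ Nat.divide (2*N) p -> cs N p = (1 - (-1)^p)/2.
Proof.
  intros HN Hd.
  assert (HN' : 0 < INR N) by (apply lt_0_INR; lia).
  pose proof (Nat.div_mod p (2*N) ltac:(lia)) as Hp.
  set (q := (p / (2*N))%nat) in *. set (r := (p mod (2*N))%nat) in *.
  assert (Hr : (r < 2*N)%nat) by (apply Nat.mod_upper_bound; lia).
  assert (Hr0 : (0 < r)%nat).
  { destruct r eqn:Er; [|lia]. exfalso. apply Hd. exists q. lia. }
  assert (Hcs : cs N p = cs N r).
  { unfold cs. apply sum_eq; intros m _.
    rewrite Hp at 1. rewrite plus_INR, !mult_INR.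
    replace ((INR 2 * INR N * INR q + INR r) * INR m * PI / INR N)
      with (INR r * INR m * PI / INR N + 2 * INR (q*m) * PI)
      by (rewrite mult_INR; simpl; field; lra).
    apply cos_period. }
  rewrite Hcs, cs_r by lia.
  rewrite Hp. rewrite pow_add.
  replace (2 * N * q)%nat with (2 * (N * q))%nat by lia. rewrite pow_1_even. field.
Qed.

Definition g (N i m : nat) : R :=
  sin (INR m * PI / INR N) * sin (INR (i+1) * (INR m * PI / INR N)).
Definition SA (N i : nat) : R := sum_f_R0 (g N i) (N-1).

Lemma SA_cs (N i : nat) : (0 < N)%nat -> SA N i = (cs N i - cs N (i+2)) / 2.
Proof.
  intro HN. assert (HN' : 0 < INR N) by (apply lt_0_INR; lia).
  unfold SA, cs.
  rewrite (sum_eq _ (fun m => (cos (INR i * INR m * PI / INR N) - cos (INR (i+2) * INR m * PI / INR N)) * /2)).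
  - rewrite <- scal_sum, minus_sum. field.
  - intros m _. unfold g. set (a := INR m * PI / INR N).
    replace (INR i * INR m * PI / INR N) with (INR (i+1) * a - a)
      by (unfold a; rewrite plus_INR; simpl; field; lra).
    replace (INR (i+2) * INR m * PI / INR N) with (INR (i+1) * a + a)
      by (unfold a; rewrite !plus_INR; simpl; field; lra).
    rewrite cos_minus, cos_plus. field.
Qed.

Lemma SA_alt (N i : nat) : (0 < N)%nat ->
  sum_f_R0 (fun m => (-1)^m * g N i m) (N-1) = SA N (i+N).
Proof.
  intro HN. assert (HN' : 0 < INR N) by (apply lt_0_INR; lia).
  unfold SA. apply sum_eq. intros m _. unfold g.
  replace (INR (i + N + 1) * (INR m * PI / INR N)) with (INR (i+1) * (INR m * PI / INR N) + INR m * PI)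
    by (rewrite !plus_INR; field; lra).
  rewrite sin_shift. ring.
Qed.

Lemma m1_add2 (p : nat) : (-1)^(p+2) = (-1)^p.
Proof. rewrite pow_add. simpl. ring. Qed.

Lemma L1 (N i : nat) : (3 <= N)%nat -> ~ Nat.divide N i -> ~ Nat.divide N (i+2) -> SA N i = 0.
Proof.
  intros HN H1 H2. rewrite SA_cs by lia.
  rewrite (cs_ndiv N i) by (lia || (intros [c Hc]; apply H1; exists (c*2)%nat; lia)).
  rewrite (cs_ndiv N (i+2)) by (lia || (intros [c Hc]; apply H2; exists (c*2)%nat; lia)).
  rewrite m1_add2. field.
Qed.

Lemma nd2 (N a : nat) : (3 <= N)%nat -> Nat.divide (2*N) a -> ~ Nat.divide (2*N) (a+2).
Proof.
  intros HN Ha Hb. pose proof (Nat.divide_add_cancel_r _ _ _ Ha Hb) as H.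
  apply Nat.divide_pos_le in H; lia.
Qed.

Lemma nd2' (N a : nat) : (3 <= N)%nat -> Nat.divide (2*N) (a+2) -> ~ Nat.divide (2*N) a.
Proof. intros HN Hb Ha. exact (nd2 N a HN Ha Hb). Qed.

Lemma ndN (N t : nat) : (3 <= N)%nat -> ~ Nat.divide (2*N) (2*t*N + N).
Proof.
  intros HN Hb. assert (Ha : Nat.divide (2*N) (2*t*N)) by (exists t; lia).
  pose proof (Nat.divide_add_cancel_r _ _ _ Ha Hb) as H.
  apply Nat.divide_pos_le in H; lia.
Qed.

Lemma ndN2 (N t : nat) : (3 <= N)%nat -> ~ Nat.divide (2*N) (2*t*N + N + 2).
Proof.
  intros HN Hb. assert (Ha : Nat.divide (2*N) (2*t*N)) by (exists t; lia).
  replace (2*t*N+N+2)%nat with (2*t*N + (N+2))%nat in Hb by lia.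
  pose proof (Nat.divide_add_cancel_r _ _ _ Ha Hb) as H.
  apply Nat.divide_pos_le in H; lia.
Qed.

Lemma L2 (N nu : nat) : (3 <= N)%nat -> SA N (nu*N) = INR N / 4 * (1 + (-1)^nu).
Proof.
  intros HN. rewrite SA_cs by lia.
  destruct (Nat.Even_or_Odd nu) as [[t Ht]|[t Ht]]; subst nu.
  - assert (Hd : Nat.divide (2*N) (2*t*N)) by (exists t; lia).
    rewrite cs_div by (lia || exact Hd).
    rewrite cs_ndiv by (lia || exact (nd2 N _ HN Hd)).
    rewrite m1_add2. replace (2*t*N)%nat with (2*(t*N))%nat by lia.
    rewrite !pow_1_even. field.
  - replace ((2*t+1)*N)%nat with (2*t*N+N)%nat by lia.
    rewrite !cs_ndiv by (lia || exact (ndN N t HN) || exact (ndN2 N t HN)).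
    rewrite m1_add2. replace (2*t+1)%nat with (S (2*t)) by lia. rewrite pow_1_odd. field.
Qed.

Lemma L3 (N nu i : nat) : (3 <= N)%nat -> (i+2 = nu*N)%nat -> SA N i = - (INR N / 4 * (1 + (-1)^nu)).
Proof.
  intros HN Hi. rewrite SA_cs by lia. rewrite Hi.
  destruct (Nat.Even_or_Odd nu) as [[t Ht]|[t Ht]]; subst nu.
  - assert (Hd : Nat.divide (2*N) (i+2)) by (exists t; lia).
    rewrite cs_ndiv by (lia || exact (nd2' N _ HN Hd)).
    rewrite Hi in Hd. rewrite cs_div by (lia || exact Hd).
    assert (E : (-1)^i = 1).
    { rewrite <- m1_add2, Hi. replace (2*t*N)%nat with (2*(t*N))%nat by lia. apply pow_1_even. }
    rewrite E, pow_1_even. field.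
  - replace ((2*t+1)*N)%nat with (2*t*N+N)%nat in * by lia.
    assert (Hn : ~ Nat.divide (2*N) i).
    { intros [s Hs]. destruct (Nat.le_gt_cases s t) as [Hst|Hst].
      - assert (N*s <= N*t)%nat by (apply Nat.mul_le_mono_l; lia). nia.
      - assert (N*(t+1) <= N*s)%nat by (apply Nat.mul_le_mono_l; lia). nia. }
    rewrite !cs_ndiv by (lia || exact Hn || exact (ndN N t HN)).
    rewrite <- Hi, m1_add2. replace (2*t+1)%nat with (S (2*t)) by lia. rewrite pow_1_odd. field.
Qed.

Lemma term_eq (n i j m k : nat) : (1 <= k)%nat ->
  (1 - xnode n m ^2) * (1 - ynode n m k ^2) * chebU i (xnode n m) * chebU j (ynode n m k)
  = g (n+2) i m * g (n+3) j (if Nat.odd m then 2*k else 2*k-1)%nat.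
Proof.
  intro Hk.
  assert (Ey : ynode n m k = cos (INR (if Nat.odd m then 2*k else 2*k-1)%nat * PI / INR (n+3))).
  { unfold ynode. destruct (Nat.odd m).
    - rewrite mult_INR. reflexivity.
    - rewrite minus_INR by lia. rewrite mult_INR. reflexivity. }
  rewrite Ey. unfold xnode, g.
  rewrite <- !cheb_term. ring.
Qed.

Lemma pairing (f : nat -> R) (h : nat) :
  sum_f_R0 f (2*(h+1)) = f 0%nat + sum_f_R0 (fun k => f (2*k+1)%nat + f (2*k+2)%nat) h.
Proof.
  induction h as [|h IH].
  - simpl. rewrite Rplus_assoc. reflexivity.
  - replace (2*(S h+1))%nat with (S (S (2*(h+1)))) by lia.
    rewrite !tech5, IH.
    replace (S (2*(h+1))) with (2 * S h + 1)%nat by lia.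
    replace (S (2 * S h + 1)) with (2 * S h + 2)%nat by lia.
    ring.
Qed.

Lemma g0 (N i : nat) : g N i 0 = 0.
Proof. unfold g. simpl. replace (0 * PI / INR N) with 0 by (unfold Rdiv; ring). rewrite sin_0. ring. Qed.

Lemma inner_sums (h j : nat) :
  let M := (2*h+3)%nat in
  sum_f_R0 (fun k => g M j (2*(S k))%nat) h = (SA M j + SA M (j+M))/2 /\
  sum_f_R0 (fun k => g M j (2*(S k) - 1)%nat) h = (SA M j - SA M (j+M))/2.
Proof.
  intro M.
  assert (P : SA M j = sum_f_R0 (fun k => g M j (2*k+1)%nat + g M j (2*k+2)%nat) h).
  { unfold SA. replace (M-1)%nat with (2*(h+1))%nat by (unfold M; lia).
    rewrite pairing, g0. ring. }
  assert (Q : SA M (j+M) = sum_f_R0 (fun k => g M j (2*k+2)%nat - g M j (2*k+1)%nat) h).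
  { rewrite <- SA_alt by (unfold M; lia).
    replace (M-1)%nat with (2*(h+1))%nat by (unfold M; lia).
    rewrite pairing, g0, Rmult_0_r, Rplus_0_l. apply sum_eq; intros k _.
    rewrite !pow_add, pow_1_even. simpl. ring. }
  rewrite P, Q. split.
  - rewrite (sum_eq (fun k => g M j (2 * S k)%nat) (fun k => g M j (2*k+2)%nat))
      by (intros k _; f_equal; lia).
    rewrite <- plus_sum.
    rewrite (sum_eq (fun k => g M j (2*k+1)%nat + g M j (2*k+2)%nat + (g M j (2*k+2)%nat - g M j (2*k+1)%nat)) (fun k => g M j (2*k+2)%nat * 2) h) by (intros k _; ring).
    rewrite <- scal_sum. field.
  - rewrite (sum_eq (fun k => g M j (2 * S k - 1)%nat) (fun k => g M j (2*k+1)%nat))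
      by (intros k _; f_equal; lia).
    rewrite <- minus_sum.
    rewrite (sum_eq (fun k => g M j (2*k+1)%nat + g M j (2*k+2)%nat - (g M j (2*k+2)%nat - g M j (2*k+1)%nat)) (fun k => g M j (2*k+1)%nat * 2) h) by (intros k _; ring).
    rewrite <- scal_sum. field.
Qed.

Lemma m1_odd (m : nat) : Nat.odd m = true -> (-1)^m = -1.
Proof. intro H. apply Nat.odd_spec in H. destruct H as [t ->].
  replace (2*t+1)%nat with (S (2*t)) by lia. apply pow_1_odd. Qed.

Lemma m1_even (m : nat) : Nat.odd m = false -> (-1)^m = 1.
Proof. intro H. assert (Nat.even m = true) by (rewrite <- Nat.negb_odd, H; reflexivity).
  apply Nat.even_spec in H0. destruct H0 as [t ->]. apply pow_1_even. Qed.

Lemma Isum_formula (n h i j : nat) : n = (2*h)%nat ->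
  Isum n i j = (SA (n+2) i * SA (n+3) j - SA (n+2) (i+(n+2)) * SA (n+3) (j+(n+3)))/2.
Proof.
  intro Hn. subst n. unfold Isum.
  replace ((2*h)/2)%nat with h by (rewrite Nat.mul_comm, Nat.div_mul; lia).
  destruct (inner_sums h j) as [E O]. cbv zeta in E, O.
  set (N := (2*h+2)%nat) in *. set (M := (2*h+3)%nat) in *.
  set (SB := SA M j) in *. set (SB' := SA M (j+M)) in *.
  rewrite (sum_eq _ (fun m' => g N i (S m') * (SB/2) - ((-1)^(S m') * g N i (S m')) * (SB'/2)) (2*h)).
  - rewrite minus_sum, <- !scal_sum.
    assert (HA : SA N i = sum_f_R0 (fun m => g N i (S m)) (2*h)).
    { unfold SA. replace (N-1)%nat with (S (2*h)) by (unfold N; lia).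
      rewrite decomp_sum by lia. rewrite g0. rewrite Nat.pred_succ. ring. }
    assert (HA' : SA N (i+N) = sum_f_R0 (fun m => (-1)^(S m) * g N i (S m)) (2*h)).
    { rewrite <- SA_alt by (unfold N; lia). replace (N-1)%nat with (S (2*h)) by (unfold N; lia).
      rewrite decomp_sum by lia. rewrite g0. rewrite Nat.pred_succ. ring. }
    rewrite <- HA, <- HA'. field.
  - intros m' _.
    rewrite (sum_eq _ (fun k' => g M j (if Nat.odd (S m') then 2*S k' else 2*S k'-1)%nat * g N i (S m')) h).
    + rewrite <- scal_sum. destruct (Nat.odd (S m')) eqn:Eo.
      * rewrite E, (m1_odd _ Eo). fold SB SB'. field.
      * rewrite O, (m1_even _ Eo). fold SB SB'. field.
    + intros k' _. cbv zeta. rewrite term_eq by lia. apply Rmult_comm.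
Qed.

Lemma m1S (p : nat) : (-1)^(p+1) = - (-1)^p.
Proof. rewrite pow_add. simpl. ring. Qed.

Theorem proposition3 (n : nat) (Hpos : (0 < n)%nat) (Heven : Nat.Even n) :
  (forall i j : nat,
     (~ Nat.divide (n + 2) i /\ ~ Nat.divide (n + 2) (i + 2))
     \/ (~ Nat.divide (n + 3) j /\ ~ Nat.divide (n + 3) (j + 2)) ->
     Isum n i j = 0)
  /\ (forall nu mu i j : nat,
        i = (nu * (n + 2))%nat -> j = (mu * (n + 3))%nat ->
        Isum n i j = / (2 * Cn n) * ((-1) ^ nu + (-1) ^ mu))
  /\ (forall nu mu i j : nat,
        i = (nu * (n + 2))%nat -> (j + 2)%nat = (mu * (n + 3))%nat ->
        Isum n i j = - (/ (2 * Cn n) * ((-1) ^ nu + (-1) ^ mu)))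
  /\ (forall nu mu i j : nat,
        (i + 2)%nat = (nu * (n + 2))%nat -> j = (mu * (n + 3))%nat ->
        Isum n i j = - (/ (2 * Cn n) * ((-1) ^ nu + (-1) ^ mu)))
  /\ (forall nu mu i j : nat,
        (i + 2)%nat = (nu * (n + 2))%nat -> (j + 2)%nat = (mu * (n + 3))%nat ->
        Isum n i j = / (2 * Cn n) * ((-1) ^ nu + (-1) ^ mu)).
Proof.
  destruct Heven as [h Hh].
  assert (HN : (3 <= n+2)%nat) by lia. assert (HM : (3 <= n+3)%nat) by lia.
  assert (PN : 0 < INR (n+2)) by (apply lt_0_INR; lia).
  assert (PM : 0 < INR (n+3)) by (apply lt_0_INR; lia).
  assert (Hshift : forall K p, ~ Nat.divide K p -> ~ Nat.divide K (p + K)).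
  { intros K p H D. apply H. rewrite Nat.add_comm in D.
    exact (Nat.divide_add_cancel_r _ _ _ (Nat.divide_refl K) D). }
  assert (Hshift2 : forall K p, ~ Nat.divide K (p+2) -> ~ Nat.divide K (p + K + 2)).
  { intros K p H D. apply H. replace (p + K + 2)%nat with (K + (p+2))%nat in D by lia.
    exact (Nat.divide_add_cancel_r _ _ _ (Nat.divide_refl K) D). }
  unfold Cn.
  split; [|split; [|split; [|split]]].
  - intros i j [[H1 H2]|[H1 H2]]; rewrite (Isum_formula n h i j Hh).
    + rewrite (L1 (n+2) i), (L1 (n+2) (i+(n+2))) by (auto; lia). field.
    + rewrite (L1 (n+3) j), (L1 (n+3) (j+(n+3))) by (auto; lia). field.
  - intros nu mu i j -> ->. rewrite (Isum_formula n h _ _ Hh).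
    replace (nu*(n+2) + (n+2))%nat with ((nu+1)*(n+2))%nat by lia.
    replace (mu*(n+3) + (n+3))%nat with ((mu+1)*(n+3))%nat by lia.
    rewrite !L2 by lia. rewrite !m1S. field. lra.
  - intros nu mu i j -> Hj. rewrite (Isum_formula n h _ _ Hh).
    replace (nu*(n+2) + (n+2))%nat with ((nu+1)*(n+2))%nat by lia.
    rewrite !L2 by lia.
    rewrite (L3 (n+3) mu j), (L3 (n+3) (mu+1) (j+(n+3))) by lia.
    rewrite !m1S. field. lra.
  - intros nu mu i j Hi ->. rewrite (Isum_formula n h _ _ Hh).
    replace (mu*(n+3) + (n+3))%nat with ((mu+1)*(n+3))%nat by lia.
    rewrite !L2 by lia.
    rewrite (L3 (n+2) nu i), (L3 (n+2) (nu+1) (i+(n+2))) by lia.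
    rewrite !m1S. field. lra.
  - intros nu mu i j Hi Hj. rewrite (Isum_formula n h _ _ Hh).
    rewrite (L3 (n+3) mu j), (L3 (n+3) (mu+1) (j+(n+3))) by lia.
    rewrite (L3 (n+2) nu i), (L3 (n+2) (nu+1) (i+(n+2))) by lia.
    rewrite !m1S. field. lra.
Qed.
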